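(* Let $\mu$ be a probability measure on $[0,\infty)$ with $\mu(\{0\})<1$, and let $p\in\mathbb N$. Then $m_p(\mu)=\int_{[0,\infty)}x^p\,\mu(dx)<\infty$ if and only if there exist real numbers $r_1,\dots,r_p$ such that $$\frac1x K_\mu(-x)=-r_1+r_2x+\dots+(-1)^p r_p x^{p-1}+o(x^{p-1})\quad\text{as } x\downarrow 0,\ x>0.$$
   Context: For a probability measure $\mu$ on $[0,\infty)$ with $\mu(\{0\})<1$, define $\psi_\mu(z)=\int_{[0,\infty)}\frac{z\xi}{1-z\xi}\,\mu(d\xi)$ for $z\in\mathbb C\setminus[0,\infty)$, and $K_\mu(z)=\psi_\mu(z)/(1+\psi_\mu(z))$. *)

(* Defs.v *)
From HB Require Import structures.
From mathcomp Require Import all_boot all_order all_algebra.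
From mathcomp Require Import all_classical all_reals all_analysis.
Set Implicit Arguments. Unset Strict Implicit. Unset Printing Implicit Defensive.
Import Order.TTheory GRing.Theory Num.Theory.
Import numFieldNormedType.Exports.
Local Open Scope classical_set_scope.
Local Open Scope ring_scope.

(* psi_mu(z) = \int_{[0,oo)} z xi / (1 - z xi) mu(dxi), restricted to real
   arguments z (only z = -x, x > 0, is used in the statement). *)
Definition psi (R : realType) (mu : probability R R) (z : R) : R :=
  Rintegral mu `[0%R, +oo[%classic (fun xi => z * xi / (1 - z * xi)).

Definition Kmu (R : realType) (mu : probability R R) (z : R) : R :=
  psi mu z / (1 + psi mu z).

Definition moment (R : realType) (mu : probability R R) (p : nat) : \bar R :=
  (\int[mu]_(x in `[0%R, +oo[%classic) (x ^+ p)%:E)%E.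

(* Main.v *)
Require Import Defs.
From HB Require Import structures.
From mathcomp Require Import all_boot all_order all_algebra.
From mathcomp Require Import all_classical all_reals all_analysis.
From mathcomp Require Import ring lra.
From mathcomp Require Import measurable_realfun.
Import Order.TTheory GRing.Theory Num.Theory.
Import numFieldNormedType.Exports.
Local Open Scope classical_set_scope.
Local Open Scope ring_scope.

Section Alg.
Variable R : realType.
Implicit Types (f g h : R -> R) (n : nat).
#[local] Instance Fr : Filter ((0:R)^'+) := at_right_proper_filter 0.

Definition small n h := (fun x => h x / x ^+ n) @ (0:R)^'+ --> (0:R).
Definition En n f := exists P : {poly R}, small n (fun x => f x - P.[x]).

Lemma cvg_pow f (l : R) n : f x @[x --> 0^'+] --> l ->
  (f x ^+ n) @[x --> (0:R)^'+] --> l ^+ n.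
Proof.
move=> hf; elim: n => [|n IH].
  by rewrite expr0; under eq_fun do rewrite expr0; exact: cvg_cst.
rewrite exprS; under eq_fun do rewrite exprS; exact: cvgM.
Qed.
Arguments cvg_pow {f l} n.

Lemma cvg_id0 : x @[x --> (0:R)^'+] --> (0:R).
Proof. by apply: cvg_at_right_filter; exact: cvg_id. Qed.

Lemma cvg_near f g (l : R) : (\forall x \near (0:R)^'+, f x = g x) ->
  f x @[x --> 0^'+] --> l -> g x @[x --> 0^'+] --> l.
Proof.
move=> fg hf; apply: cvg_trans hf; apply: near_eq_cvg.
by near=> x; rewrite (near fg x).
Unshelve. all: by end_near.
Qed.
Arguments cvg_near {f g l}.

Lemma small_near n f g : (\forall x \near (0:R)^'+, f x = g x) ->
  small n f -> small n g.
Proof.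
move=> fg; apply: cvg_near; near=> x; by rewrite (near fg x).
Unshelve. all: by end_near.
Qed.
Arguments small_near {n f g}.

Lemma smallD n f g : small n f -> small n g -> small n (fun x => f x + g x).
Proof.
move=> hf hg; rewrite /small in hf hg *.
pose proof (cvgD hf hg) as H; rewrite addr0 in H.
apply: (cvg_near _ H); near=> x => /=.
by rewrite mulrDl.
Unshelve. all: by end_near.
Qed.
Arguments smallD {n f g}.

Lemma smallZ n f (c : R) : small n f -> small n (fun x => c * f x).
Proof.
move=> hf; rewrite /small in hf *.
pose proof (cvgM (cvg_cst c) hf) as H; rewrite mulr0 in H.
apply: (cvg_near _ H); near=> x => /=.
by rewrite mulrA.
Unshelve. all: by end_near.
Qed.
Arguments smallZ {n f} c.

Lemma smallM n f g (l : R) : small n f -> g x @[x --> 0^'+] --> l ->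
  small n (fun x => f x * g x).
Proof.
move=> hf hg; rewrite /small in hf hg *.
pose proof (cvgM hf hg) as H; rewrite mul0r in H.
apply: (cvg_near _ H); near=> x => /=.
by rewrite mulrAC.
Unshelve. all: by end_near.
Qed.
Arguments smallM {n f g l}.

Lemma smallS n f : small n.+1 f -> small n f.
Proof.
move=> hf; rewrite /small in hf *.
pose proof (cvgM cvg_id0 hf) as H; rewrite mul0r in H.
apply: (cvg_near _ H).
near=> x => /=.
have x0 : x != 0 by rewrite gt_eqF //; near: x; exact: nbhs_right_gt.
have xn0 : x ^+ n != 0 by rewrite expf_neq0.
by rewrite exprS; field; apply/andP; split.
Unshelve. all: by end_near.
Qed.
Arguments smallS {n f}.

Lemma small0 f : small 0 f <-> f x @[x --> 0^'+] --> (0:R).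
Proof.
rewrite /small; split => H; (apply: cvg_trans H; apply: near_eq_cvg; near=> x => /=);
  by rewrite expr0 invr1 mulr1.
Unshelve. all: by end_near.
Qed.

Lemma smallX n f (l : R) : f x @[x --> 0^'+] --> l ->
  small n (fun x => x ^+ n.+1 * f x).
Proof.
move=> hf; rewrite /small in hf *.
pose proof (cvgM cvg_id0 hf) as H; rewrite mul0r in H.
apply: (cvg_near _ H).
near=> x => /=.
have x0 : x != 0 by rewrite gt_eqF //; near: x; exact: nbhs_right_gt.
have xn0 : x ^+ n != 0 by rewrite expf_neq0.
by rewrite exprS; field.
Unshelve. all: by end_near.
Qed.
Arguments smallX n {f l}.

Lemma small_cvg n f : small n f -> f x @[x --> 0^'+] --> (0:R).
Proof.
elim: n => [|n IH] H; first by apply/small0.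
exact/IH/smallS.
Qed.
Arguments small_cvg {n f}.

Lemma horner_cvg (P : {poly R}) : P.[x] @[x --> 0^'+] --> P.[0].
Proof. by apply: cvg_at_right_filter; exact: continuous_horner. Qed.

Lemma En_cvg n f : En n f -> exists l : R, f x @[x --> 0^'+] --> l.
Proof.
case=> P /small_cvg H; exists P.[0].
pose proof (cvgD H (horner_cvg P)) as H1; rewrite add0r in H1.
apply: (cvg_near _ H1); near=> x => /=; by rewrite subrK.
Unshelve. all: by end_near.
Qed.
Arguments En_cvg {n f}.

Lemma En_near n f g : (\forall x \near (0:R)^'+, f x = g x) -> En n f -> En n g.
Proof.
move=> fg [P HP]; exists P; apply: small_near HP; near=> x; by rewrite (near fg x).
Unshelve. all: by end_near.
Qed.
Arguments En_near {n f g}.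

Lemma En_poly n (P : {poly R}) : En n (horner P).
Proof.
exists P; apply: small_near (smallZ 0 (smallX n (cvg_cst (0:R)))).
by near=> x; rewrite !mul0r subrr.
Unshelve. all: by end_near.
Qed.

Lemma EnD n f g : En n f -> En n g -> En n (fun x => f x + g x).
Proof.
move=> [P HP] [Q HQ]; exists (P + Q); apply: small_near (smallD HP HQ).
by near=> x; rewrite hornerD; ring.
Unshelve. all: by end_near.
Qed.
Arguments EnD {n f g}.

Lemma EnN n f : En n f -> En n (fun x => - f x).
Proof.
move=> [P HP]; exists (- P); apply: small_near (smallZ (-1) HP).
by near=> x; rewrite hornerN; ring.
Unshelve. all: by end_near.
Qed.
Arguments EnN {n f}.

Lemma En_small n f h : En n f -> small n h -> En n (fun x => f x + h x).
Proof.
move=> [P HP] Hh; exists P; apply: small_near (smallD HP Hh).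
by near=> x; ring.
Unshelve. all: by end_near.
Qed.
Arguments En_small {n f h}.

Lemma EnM n f g : En n f -> En n g -> En n (fun x => f x * g x).
Proof.
move=> hf hg; have [lg Hg] := En_cvg hg.
case: hf => P HP; case: hg => Q HQ; exists (P * Q).
have H1 := smallM HP Hg.
have H2 := smallM HQ (horner_cvg P).
apply: small_near (smallD H1 H2).
near=> x; rewrite hornerM; ring.
Unshelve. all: by end_near.
Qed.
Arguments EnM {n f g}.

Lemma En_sum n m (F : nat -> R -> R) : (forall j, En n (F j)) ->
  En n (fun x => \sum_(j < m) F j x).
Proof.
move=> HF; elim: m => [|m IH].
  apply: En_near (En_poly n 0); near=> x; by rewrite big_ord0 horner0.
apply: En_near (EnD IH (HF m)); near=> x; by rewrite big_ord_recr.
Unshelve. all: by end_near.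
Qed.

Lemma EnXpow n j f : En n f -> En n (fun x => x ^+ j * f x ^+ j.+1).
Proof.
move=> hf; apply: EnM; first by apply: En_near (En_poly n ('X^j)); near=> x; rewrite hornerXn.
elim: j => [|j IH]; first by apply: En_near hf; near=> x; rewrite expr1.
by apply: En_near (EnM hf IH); near=> x; rewrite [in RHS]exprS.
Unshelve. all: by end_near.
Qed.
Arguments EnXpow {n} j {f}.

Lemma iter_id (a b x : R) m : a = - b + x * a * b ->
  a = - \sum_(j < m) x ^+ j * b ^+ j.+1 + x ^+ m * b ^+ m * a.
Proof.
move=> hab; elim: m => [|m IH]; first by rewrite big_ord0 oppr0 add0r !expr0 !mul1r.
rewrite big_ord_recr /= {1}IH.
set S := \sum_(_ < m) _.
have -> : x ^+ m * b ^+ m * a = x ^+ m * b ^+ m * (- b + x * a * b) by rewrite -hab.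
rewrite !exprS; ring.
Qed.

Lemma En_iter n a b : (\forall x \near (0:R)^'+, a x = - b x + x * a x * b x) ->
  En n b -> (exists l : R, a x @[x --> 0^'+] --> l) -> En n a.
Proof.
move=> hab hb [la Ha].
have [lb Hb] := En_cvg hb.
have Hs : En n (fun x => - \sum_(j < n.+1) x ^+ j * b x ^+ j.+1).
  apply: EnN; apply: (En_sum n n.+1 (fun j x => x ^+ j * b x ^+ j.+1)) => j.
  exact: EnXpow.
have Hr : small n (fun x => x ^+ n.+1 * (b x ^+ n.+1 * a x)).
  pose proof (cvgM (cvg_pow n.+1 Hb) Ha) as H.
  exact: (smallX n H).
apply: En_near (En_small Hs Hr); near=> x.
by rewrite mulrA -iter_id //; exact: (near hab x).
Unshelve. all: by end_near.
Qed.


Lemma smallXl n h : small n h -> small n.+1 (fun x => x * h x).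
Proof.
move=> hh; rewrite /small in hh *; apply: (cvg_near _ hh); near=> x.
have x0 : x != 0 by rewrite gt_eqF //; near: x; exact: nbhs_right_gt.
have xn0 : x ^+ n != 0 by rewrite expf_neq0.
by rewrite exprS; field; apply/andP; split.
Unshelve. all: by end_near.
Qed.
Arguments smallXl {n h}.

Lemma smallDivX n h : small n.+1 h -> small n (fun x => h x / x).
Proof.
move=> hh; rewrite /small in hh *; apply: (cvg_near _ hh); near=> x.
have x0 : x != 0 by rewrite gt_eqF //; near: x; exact: nbhs_right_gt.
have xn0 : x ^+ n != 0 by rewrite expf_neq0.
by rewrite exprS; field; apply/andP; split.
Unshelve. all: by end_near.
Qed.
Arguments smallDivX {n h}.

Lemma horner_drop1 (P : {poly R}) x : P.[x] = P.[0] + x * (drop_poly 1 P).[x].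
Proof.
rewrite -{1}(poly_take_drop 1 P) hornerD hornerM hornerXn expr1 /take_poly horner_poly.
by rewrite big_ord1 expr0 mulr1 horner_coef0 mulrC.
Qed.

End Alg.
Arguments cvg_pow {R} {f l} n.
Arguments cvg_near {R} {f g l}.
Arguments small_near {R} {n f g}.
Arguments smallD {R} {n f g}.
Arguments smallZ {R} {n f} c.
Arguments smallM {R} {n f g l}.
Arguments smallS {R} {n f}.
Arguments smallX {R} n {f l}.
Arguments small_cvg {R} {n f}.
Arguments En_cvg {R} {n f}.
Arguments En_near {R} {n f g}.
Arguments EnD {R} {n f g}.
Arguments EnN {R} {n f}.
Arguments En_small {R} {n f h}.
Arguments EnM {R} {n f g}.
Arguments EnXpow {R} {n} j {f}.
Arguments smallXl {R} {n h}.
Arguments smallDivX {R} {n h}.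
Arguments small {R}.
Arguments horner_cvg {R} P.
Arguments small0 {R} f.
Arguments En_poly {R} n P.
Arguments En_sum {R} n m F.
Arguments En_iter {R} n a b.
Arguments horner_drop1 {R} P x.
Arguments cvg_id0 {R}.
Arguments iter_id {R} a b x m.
Arguments En {R}.

Section Meas.
Variable R : realType.
Variable mu : probability R R.
Hypothesis hsupp : mu `]-oo, 0%R[%classic = 0%E.

#[local] Instance Fr2 : Filter ((0:R)^'+) := at_right_proper_filter 0.

Let D0 : set R := `[0%R, +oo[%classic.
Let mD0 : measurable D0. Proof. exact: measurable_itv. Qed.

Definition fk (k : nat) (x xi : R) := xi ^+ k / (1 + x * `|xi|).
Definition Ie k x := (\int[mu]_(xi in D0) (fk k x xi)%:E)%E.
Definition G k x := fine (Ie k x).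

Lemma exprn_cont k : continuous (fun y : R => y ^+ k).
Proof.
have -> : (fun y : R => y ^+ k) = horner 'X^k by apply/funext => y; rewrite hornerXn.
exact: continuous_horner.
Qed.

Lemma fk_cont k x : 0 <= x -> continuous (fk k x).
Proof.
move=> x0 xi; apply: cvgM.
  exact: exprn_cont.
apply: cvgV; first by rewrite gt_eqF // ltr_pwDl // mulr_ge0.
apply: cvgD; first exact: cvg_cst.
apply: cvgM; first exact: cvg_cst.
exact: norm_continuous.
Unshelve. all: by end_near.
Qed.

Lemma fk_meas k x : 0 <= x -> measurable_fun D0 (EFin \o fk k x).
Proof.
move=> x0; apply/measurable_realfun.measurable_EFinP.
apply: measurable_funTS.
exact: measurable_realfun.continuous_measurable_fun (fk_cont k x x0).
Qed.

Lemma fk_ge0 k x xi : 0 <= x -> D0 xi -> 0 <= fk k x xi.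
Proof.
move=> x0; rewrite /D0 /= in_itv /= andbT => xi0.
by rewrite /fk divr_ge0 ?exprn_ge0 // addr_ge0 // mulr_ge0.
Qed.

Lemma fk_le k x y xi : 0 <= x -> x <= y -> D0 xi -> fk k y xi <= fk k x xi.
Proof.
move=> x0 xy; rewrite /D0 /= in_itv /= andbT => xi0.
rewrite /fk ler_wpM2l ?exprn_ge0 //.
rewrite lef_pV2 ?posrE ?ltr_pwDl ?mulr_ge0 //; last by apply: le_trans xy.
by rewrite lerD2l ler_wpM2r.
Qed.

Lemma Ie0 k : Ie k 0 = moment mu k.
Proof.
rewrite /Ie /moment; apply: eq_integral => xi _.
by rewrite /fk mul0r addr0 divr1.
Qed.

Lemma Ie_ge0 k x : 0 <= x -> (0 <= Ie k x)%E.
Proof. move=> x0; apply: integral_ge0 => xi hxi; rewrite lee_fin; exact: fk_ge0. Qed.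

Lemma Ie_le k x y : 0 <= x -> x <= y -> (Ie k y <= Ie k x)%E.
Proof.
move=> x0 xy; apply: ge0_le_integral => //.
- move=> xi hxi; rewrite lee_fin; apply: fk_ge0 => //; exact: le_trans xy.
- apply: fk_meas; exact: le_trans xy.
- exact: fk_meas.
- by move=> xi hxi; rewrite lee_fin; exact: fk_le.
Qed.

Lemma mom_ge0 k : (0 <= moment mu k)%E.
Proof. by rewrite -Ie0; exact: Ie_ge0. Qed.

Lemma Ie_le_mom k x : 0 <= x -> (Ie k x <= moment mu k)%E.
Proof. by move=> x0; rewrite -Ie0; exact: Ie_le. Qed.

Lemma mom0 : moment mu 0 = 1%E.
Proof.
rewrite -Ie0 /Ie.
rewrite (eq_integral (cst 1%E)); last by move=> xi _; rewrite /fk expr0 mul0r addr0 divr1.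
rewrite integral_cst // mul1e.
have -> : D0 = ~` `]-oo, 0%R[%classic by rewrite setCitvl.
have := @probability_setC _ _ _ mu `]-oo, 0%R[%classic (measurable_itv _).
by rewrite hsupp sube0 => <-.
Qed.


Lemma Ie_split k x : 0 <= x -> moment mu k = (Ie k x + x%:E * Ie k.+1 x)%E.
Proof.
move=> x0; rewrite -Ie0 /Ie.
rewrite -ge0_integralZl_EFin //; last 2 first.
- by move=> xi hxi; rewrite lee_fin; exact: fk_ge0.
- exact: fk_meas.
rewrite -ge0_integralD //; last 4 first.
- by move=> xi hxi; rewrite lee_fin; exact: fk_ge0.
- exact: fk_meas.
- by move=> xi hxi; rewrite -EFinM lee_fin mulr_ge0 // fk_ge0.
- apply/measurable_EFinP; apply: measurable_funM; first exact: measurable_cst.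
  by apply/measurable_EFinP; exact: fk_meas.
apply: eq_integral => xi; rewrite inE /D0 /= in_itv /= andbT => xi0.
rewrite -EFinM -EFinD /fk mul0r addr0 divr1; congr (_%:E).
have h : 1 + x * `|xi| != 0 by rewrite gt_eqF // ltr_pwDl // mulr_ge0.
rewrite ger0_norm // in h *; rewrite exprS; by field.
Qed.

Lemma Ie_fin k x : (moment mu k < +oo)%E -> 0 < x -> (Ie k.+1 x < +oo)%E.
Proof.
move=> hm x0; have := Ie_split k x (ltW x0).
have h1 := Ie_ge0 k x (ltW x0); have h2 := Ie_ge0 k.+1 x (ltW x0).
move: h2; case: (Ie k.+1 x) => [r| |] //= _ E; first by rewrite ltey.
move: hm; rewrite E [(x%:E * _)%E]muleC gt0_mulye ?lte_fin // => hm.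
by rewrite addey ?ltxx // in hm; rewrite gt_eqF // (lt_le_trans _ h1) // ltNye.
Qed.

Lemma Ie_fin0 x : 0 <= x -> (Ie 0 x < +oo)%E.
Proof. by move=> x0; apply: le_lt_trans (Ie_le_mom 0 x x0) _; rewrite mom0 ltey. Qed.


Lemma Ie_finite k x : (moment mu k < +oo)%E -> 0 <= x -> Ie k x = (G k x)%:E.
Proof.
move=> hm x0; rewrite /G fineK // ge0_fin_numE ?Ie_ge0 //.
exact: le_lt_trans (Ie_le_mom k x x0) hm.
Qed.

Lemma G_split k x : (moment mu k < +oo)%E -> 0 < x ->
  G k x = fine (moment mu k) - x * G k.+1 x.
Proof.
move=> hm x0.
have h1 := Ie_finite k x hm (ltW x0).
have h2 : Ie k.+1 x = (G k.+1 x)%:E.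
  by rewrite /G fineK // ge0_fin_numE ?Ie_ge0 ?ltW // Ie_fin.
rewrite (Ie_split k x (ltW x0)) h1 h2 -EFinM -EFinD /=; ring.
Qed.

Lemma mom_mono j q : (j <= q)%N -> (moment mu q < +oo)%E -> (moment mu j < +oo)%E.
Proof.
move=> jq hq.
have mX n : measurable_fun D0 (fun xi : R => (xi ^+ n)%:E).
  by apply/measurable_EFinP; exact: exprn_measurable.
apply: (@le_lt_trans _ _ (moment mu 0 + moment mu q)%E).
  have ge0 n xi : D0 xi -> (0 <= (xi ^+ n)%:E)%E.
    by rewrite /D0 /= in_itv /= andbT => xi0; rewrite lee_fin exprn_ge0.
  rewrite /moment -ge0_integralD //.
  apply: ge0_le_integral => //.
  - by move=> xi hxi; exact: ge0.
  - apply: emeasurable_funD; exact: mX.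
  - move=> xi; rewrite /D0 /= in_itv /= andbT => xi0; rewrite -EFinD lee_fin expr0.
  have [xi1|xi1] := leP xi 1.
    by rewrite (le_trans (exprn_ile1 _ xi0 xi1)) // lerDl exprn_ge0.
  rewrite addrC -[xi ^+ j]addr0 lerD //.
  rewrite -(subnKC jq) exprD ler_peMr ?exprn_ge0 //.
  by rewrite exprn_ege1 // ltW.
  - by move=> xi hxi; exact: ge0.
by rewrite mom0 lte_add_pinfty // ltey.
Qed.


Definition xs (n : nat) : R := n.+1%:R^-1.

Lemma xs_gt0 n : 0 < xs n.
Proof. by rewrite /xs invr_gt0 ltr0Sn. Qed.

Lemma xs_le n m : (n <= m)%N -> xs m <= xs n.
Proof. by move=> nm; rewrite /xs lef_pV2 ?posrE ?ltr0Sn // ler_nat ltnS. Qed.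

Lemma Ie_nd k : {homo (fun n => Ie k (xs n)) : n m / (n <= m)%N >-> (n <= m)%E}.
Proof. by move=> n m nm; apply: Ie_le; [exact: ltW (xs_gt0 m)|exact: xs_le]. Qed.

Lemma Ie_is_cvg k : cvgn (fun n => Ie k (xs n)).
Proof. by apply/cvg_ex; eexists; exact: ereal_nondecreasing_cvgn (Ie_nd k). Qed.

Lemma fk_cvgn k xi : (fun n => fk k (xs n) xi) @ \oo --> xi ^+ k.
Proof.
have : (fun n => xi ^+ k * (1 + xs n * `|xi|)^-1) @ \oo --> xi ^+ k * (1 + 0 * `|xi|)^-1.
  apply: cvgM; first exact: cvg_cst.
  apply: cvgV; first by rewrite mul0r addr0 oner_neq0.
  apply: cvgD; first exact: cvg_cst.
  apply: cvgM; last exact: cvg_cst.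
  exact: cvg_harmonic.
by rewrite mul0r addr0 invr1 mulr1.
Qed.

Lemma mom_lim k : moment mu k = limn (fun n => Ie k (xs n)).
Proof.
rewrite /Ie -(monotone_convergence mu mD0 (g' := fun n xi => (fk k (xs n) xi)%:E)).
- rewrite /moment; apply: eq_integral => xi hxi; apply/esym/cvg_lim => //.
  apply: cvg_EFin; first exact: nearW.
  exact: fk_cvgn.
- by move=> n; apply: fk_meas; exact: ltW (xs_gt0 n).
- by move=> n xi hxi; rewrite lee_fin; apply: fk_ge0 => //; exact: ltW (xs_gt0 n).
- move=> xi hxi n m nm; rewrite lee_fin; apply: fk_le => //; last exact: xs_le.
  exact: ltW (xs_gt0 m).
Qed.


Lemma G_cvg k : (moment mu k < +oo)%E ->
  G k x @[x --> (0:R)^'+] --> fine (moment mu k).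
Proof.
move=> hm; set M := fine (moment mu k).
have hM : moment mu k = M%:E by rewrite /M fineK // ge0_fin_numE ?mom_ge0.
apply/cvgrPdist_lt => e e0.
have [n hn] : exists n, ((M - e)%:E < Ie k (xs n))%E.
  apply: contrapT => /forallNP H.
  have : (moment mu k <= (M - e)%:E)%E.
    rewrite mom_lim; apply: lime_le; first exact: Ie_is_cvg.
    by apply: nearW => n; rewrite leNgt; apply/negP; exact: H.
  by rewrite hM lee_fin; lra.
near=> x.
have x0 : 0 < x by near: x; exact: nbhs_right_gt.
have xn : x < xs n by near: x; exact: nbhs_right_lt (xs_gt0 n).
have h1 := Ie_le k x (xs n) (ltW x0) (ltW xn).
have h2 := Ie_le_mom k x (ltW x0).
rewrite (Ie_finite k x hm (ltW x0)) in h1 h2.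
rewrite hM lee_fin in h2.
have h3 := lt_le_trans hn h1; rewrite lte_fin in h3.
rewrite ger0_norm; lra.
Unshelve. all: by end_near.
Qed.

Lemma G_bnd k : (forall x, 0 < x -> (Ie k x < +oo)%E) ->
  (exists l : R, G k x @[x --> (0:R)^'+] --> l) -> (moment mu k < +oo)%E.
Proof.
move=> hfin [l hl].
have hb : forall n, (Ie k (xs n) <= (l + 1)%:E)%E.
  move=> n.
  near (0:R)^'+ => y.
  have y0 : 0 < y by near: y; exact: nbhs_right_gt.
  have yn : y < xs n by near: y; exact: nbhs_right_lt (xs_gt0 n).
  have hy : `|l - G k y| < 1 by near: y; exact: cvgr_dist_lt hl _ ltr01.
  apply: (le_trans (Ie_le k y (xs n) (ltW y0) (ltW yn))).
  have -> : Ie k y = (G k y)%:E.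
    by rewrite /G fineK // ge0_fin_numE ?Ie_ge0 ?ltW // hfin.
  rewrite lee_fin; move: hy; rewrite ltr_distlC; case/andP => _ h; lra.
rewrite mom_lim; apply: (le_lt_trans (y := (l + 1)%:E)); last exact: ltey.
apply: lime_le; first exact: Ie_is_cvg.
exact: nearW.
Unshelve. all: by end_near.
Qed.


Lemma fwd n : forall k, (moment mu (k + n) < +oo)%E -> En n (G k).
Proof.
elim: n => [|n IH] k hm.
  rewrite addn0 in hm.
  exists (fine (moment mu k))%:P; apply/small0.
  pose proof (cvgB (G_cvg k hm) (cvg_cst (fine (moment mu k)))) as H.
  rewrite subrr in H; apply: (cvg_near _ H); near=> x; by rewrite hornerC.
have hk : (moment mu k < +oo)%E by apply: mom_mono hm; exact: leq_addr.
have [P HP] : En n (G k.+1) by apply: IH; rewrite addSnnS.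
exists ((fine (moment mu k))%:P - 'X * P).
apply: small_near (smallZ (-1) (smallXl HP)).
near=> x.
have x0 : 0 < x by near: x; exact: nbhs_right_gt.
rewrite (G_split k x hk x0) !hornerE /=; ring.
Unshelve. all: by end_near.
Qed.

Lemma bwd n : forall k, (moment mu k < +oo)%E -> En n (G k.+1) ->
  (moment mu (k.+1 + n) < +oo)%E.
Proof.
elim: n => [|n IH] k hm hE.
  rewrite addn0; apply: G_bnd; last exact: En_cvg hE.
  by move=> x x0; exact: Ie_fin.
have hm1 : (moment mu k.+1 < +oo)%E.
  by apply: G_bnd; [move=> x x0; exact: Ie_fin|exact: En_cvg hE].
case: hE => P HP.
have hP0 : P.[0] = fine (moment mu k.+1).
  have H1 := small_cvg HP.
  pose proof (cvgD H1 (horner_cvg P)) as H2; rewrite add0r in H2.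
  have H3 : G k.+1 x @[x --> (0:R)^'+] --> P.[0].
    by apply: (cvg_near _ H2); near=> x; rewrite /= subrK.
  rewrite -(@cvg_lim _ (@Rhausdorff R) _ _ (at_right_proper_filter 0) _ _ H3).
  exact: (@cvg_lim _ (@Rhausdorff R) _ _ (at_right_proper_filter 0) _ _ (G_cvg k.+1 hm1)).
rewrite -addSnnS; apply: IH => //.
exists (- drop_poly 1 P).
apply: small_near (smallZ (-1) (smallDivX HP)).
near=> x.
have x0 : 0 < x by near: x; exact: nbhs_right_gt.
rewrite (G_split k.+1 x hm1 x0) (horner_drop1 P x) hP0 hornerN.
field; exact: lt0r_neq0.
Unshelve. all: by end_near.
Qed.


Lemma psi_eq x : 0 < x -> psi mu (- x) = - x * G 1 x.
Proof.
move=> x0; rewrite /psi /Rintegral.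
have m0 : (moment mu 0 < +oo)%E by rewrite mom0 ltey.
have hI : Ie 1 x = (G 1 x)%:E by rewrite /G fineK // ge0_fin_numE ?Ie_ge0 ?ltW // Ie_fin.
rewrite (eq_integral (fun xi => (- x)%:E * (fk 1 x xi)%:E)%E); last first.
  move=> xi; rewrite inE /= in_itv /= andbT => xi0.
  rewrite -EFinM /fk ger0_norm // expr1; congr (_%:E); rewrite mulNr opprK; ring.
rewrite integralZl //; last first.
  apply/integrableP; split; first exact: fk_meas (ltW x0).
  rewrite (eq_integral (fun xi => (fk 1 x xi)%:E)); first exact: Ie_fin.
  by move=> xi; rewrite inE => hxi; rewrite gee0_abs // lee_fin fk_ge0 // ltW.
by rewrite -/(Ie 1 x) hI -EFinM.
Qed.

Lemma F_eq x : 0 < x -> x^-1 * Kmu mu (- x) = - G 1 x / G 0 x.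
Proof.
move=> x0.
have m0 : (moment mu 0 < +oo)%E by rewrite mom0 ltey.
have hD : G 0 x = 1 - x * G 1 x by rewrite (G_split 0 x m0 x0) mom0.
rewrite /Kmu psi_eq // hD mulNr -[1 - _]/(1 + - (x * G 1 x)).
by rewrite !mulrA mulrN mulrA mulVf ?gt_eqF // mul1r.
Qed.


Lemma main p : (moment mu p < +oo)%E <->
  exists r : nat -> R,
    (fun x : R =>
       (x^-1 * Kmu mu (- x)
        - \sum_(1 <= k < p.+1) (-1) ^+ k * r k * x ^+ k.-1)
       / x ^ (p%:Z - 1))
      @ 0%R^'+ --> 0%R.
Proof.
have m0 : (moment mu 0 < +oo)%E by rewrite mom0 ltey.
have hD : G 0 x @[x --> (0:R)^'+] --> (1:R) by have := G_cvg 0 m0; rewrite mom0.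
set F := fun x : R => x^-1 * Kmu mu (- x).
have hFe : \forall x \near (0:R)^'+, F x = - G 1 x / G 0 x.
  by near=> x; apply: F_eq; near: x; exact: nbhs_right_gt.
have hDe : \forall x \near (0:R)^'+, G 0 x = 1 - x * G 1 x.
  near=> x; rewrite (G_split 0 x m0) ?mom0 //; near: x; exact: nbhs_right_gt.
have hD0 : \forall x \near (0:R)^'+, G 0 x != 0.
  have := @cvgr_dist_lt _ _ _ _ _ _ _ hD (1/2) ltac:(lra).
  apply: filterS => x; rewrite ltr_distlC => /andP[h _].
  rewrite gt_eqF //; lra.
have hrel : \forall x \near (0:R)^'+, F x = - G 1 x + x * F x * G 1 x.
  near=> x.
  have eF : F x = - G 1 x / G 0 x by near: x; exact: hFe.
  rewrite eF.
  have eD : G 0 x = 1 - x * G 1 x by near: x; exact: hDe.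
  have dn : G 0 x != 0 by near: x; exact: hD0.
  move: eD dn; set D := G 0 x; set N := G 1 x => eD dn.
  rewrite eD in dn *; field; by [].
have hrel' : \forall x \near (0:R)^'+, G 1 x = - F x + x * G 1 x * F x.
  near=> y; have e : F y = - G 1 y + y * F y * G 1 y by near: y; exact: hrel.
  apply/eqP; rewrite -subr_eq0; apply/eqP.
  transitivity (F y - (- G 1 y + y * F y * G 1 y)); first ring.
  by rewrite -e subrr.
have FcvgN : (exists l : R, G 1 x @[x --> (0:R)^'+] --> l) ->
    exists l : R, F x @[x --> (0:R)^'+] --> l.
  case=> l hl; exists (- l * 1^-1).
  pose proof (cvgM (cvgN hl) (cvgV (oner_neq0 _) hD)) as H.
  apply: (cvg_near _ H); near=> x; by rewrite (near hFe x).
have NcvgF : (exists l : R, F x @[x --> (0:R)^'+] --> l) ->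
    exists l : R, G 1 x @[x --> (0:R)^'+] --> l.
  case=> l hl; exists (- l * 1).
  pose proof (cvgM (cvgN hl) hD) as H.
  apply: (cvg_near _ H); near=> x => /=.
  have eF : F x = - G 1 x / G 0 x by near: x; exact: hFe.
  have dn : G 0 x != 0 by near: x; exact: hD0.
  change (- F x * G 0 x = G 1 x).
  by rewrite eF mulNr divfK // opprK.
case: p => [|n].
  split => // _; exists (fun=> 0).
  pose proof (cvgM (cvgD hD (cvg_cst (-1 : R))) (cvgV (oner_neq0 _) hD)) as H.
  rewrite subrr mul0r in H.
  apply: (cvg_near _ H); near=> x => /=.
  have x0 : 0 < x by near: x; exact: nbhs_right_gt.
  have eF : F x = - G 1 x / G 0 x by near: x; exact: hFe.
  rewrite big_geq // subr0 sub0r exprN1 invrK -/(F x) eF.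
  change ((G 0 x + -1) * (G 0 x)^-1 = - G 1 x / G 0 x * x).
  have eD : G 0 x = 1 - x * G 1 x by near: x; exact: hDe.
  have dn : G 0 x != 0 by near: x; exact: hD0.
  move: eD dn; set D := G 0 x; set N := G 1 x => eD dn.
  rewrite eD in dn *; field; by [].
have ez : (n.+1)%:Z - 1 = n%:Z by rewrite intS addrC addKr.
have esum (r : nat -> R) (x : R) :
  \sum_(1 <= k < n.+2) (-1) ^+ k * r k * x ^+ k.-1 =
  \sum_(i < n.+1) (-1) ^+ i.+1 * r i.+1 * x ^+ i.
  by rewrite big_add1 /= big_mkord.
split.
  move=> hm.
  have hN : En n (G 1) by apply: fwd; rewrite add1n.
  have hF : En n F := En_iter n F (G 1) hrel hN (FcvgN (En_cvg hN)).
  case: hF => P HP.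
  exists (fun k => (-1) ^+ k * P`_k.-1).
  have H := smallD HP (smallX n (horner_cvg (drop_poly n.+1 P))).
  rewrite /small in H; apply: (cvg_near _ H); near=> x => /=.
  rewrite ez esum -/(F x).
  congr (_ / _).
  rewrite -{1}(poly_take_drop n.+1 P) hornerD hornerM hornerXn /take_poly horner_poly.
  have -> : \sum_(i < n.+1) (-1) ^+ i.+1 * ((-1) ^+ i.+1 * P`_i.+1.-1) * x ^+ i =
            \sum_(i < n.+1) P`_i * x ^+ i.
    apply: eq_bigr => i _ /=; rewrite mulrA -exprMn mulrNN mulr1 expr1n mul1r //.
  ring.
case=> r H.
have hF : En n F.
  exists (\poly_(i < n.+1) ((-1) ^+ i.+1 * r i.+1)).
  rewrite /small; apply: (cvg_near _ H); near=> x => /=.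
  rewrite ez esum horner_poly -/(F x); reflexivity.
have hN : En n (G 1) := En_iter n (G 1) F hrel' hF (NcvgF (En_cvg hF)).
by have := bwd n 0 m0 hN; rewrite add1n.
Unshelve. all: by end_near.
Qed.

End Meas.

Theorem proposition4p1 (R : realType) (mu : probability R R)
  (hsupp : mu `]-oo, 0%R[%classic = 0%E)
  (h0 : (mu [set 0%R] < 1)%E) (p : nat) :
  (moment mu p < +oo)%E <->
  exists r : nat -> R,
    (fun x : R =>
       (x^-1 * Kmu mu (- x)
        - \sum_(1 <= k < p.+1) (-1) ^+ k * r k * x ^+ k.-1)
       / x ^ (p%:Z - 1))
      @ 0%R^'+ --> 0%R.
Proof. exact: (@main R mu hsupp p). Qed.
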